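(* In the weighted kidney exchange game (W-KEG), even with two players, a player can have a strict incentive to hide vertices: there exists a 2-player W-KEG instance in which the independent agent has a unique optimal matching and one player's utility strictly increases when she removes one of her vertices (with its incident edges) from the game.
   Context: W-KEG: players $N=\{1,\dots,n\}$; player $p$ has internal graph $G^p=(V^p,E^p)$ (pairwise disjoint vertex sets); $E^I$ is a set of external edges each joining vertices of two different players; $E^I_p$ is the set of external edges incident to $V^p$. Each player $p$ has nonnegative weights $w^p_e$ on $E^p\cup E^I_p$. A strategy of player $p$ is a matching $M^p$ of $G^p$. The independent agent selects a maximum-weight matching $M^I$ of the external edges whose endpoints are uncovered by $\bigcup_pM^p$, where an external edge $(v,u)$ with $v\in V^i$, $u\in V^j$ has weight $w^I_{vu}=w^i_{vu}+w^j_{vu}$. With $M^I_p$ the edges of $M^I$ incident to $V^p$, player $p$'s utility is $\sum_{e\in M^p}w^p_e+\sum_{e\in M^I_p}w^p_e$. *)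

(* Defs.v *)
From HB Require Import structures.
From mathcomp Require Import all_boot all_order all_algebra.
Set Implicit Arguments. Unset Strict Implicit. Unset Printing Implicit Defensive.
Import Order.TTheory GRing.Theory Num.Theory.
Local Open Scope ring_scope.

(* Edges are unordered pairs, represented as 2-element sets of vertices.
   [edges] is the set of all edges (internal and external);
   [weight p e] is player p's weight w^p_e.
   The vertex set of the game is given separately as an "active" set
   A : {set V}; only edges contained in A are present in the game. *)
Record keg (n : nat) (V : finType) := KEG {
  owner : V -> 'I_n;
  edges : {set {set V}};
  weight : 'I_n -> {set V} -> rat }.

Section KEG.
Variables (n : nat) (V : finType) (G : keg n V).

Definition edges_in (A : {set V}) : {set {set V}} :=
  [set e in edges G | e \subset A].

Definition internal (p : 'I_n) (e : {set V}) : bool :=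
  [forall x in e, owner G x == p].

Definition external (e : {set V}) : bool := ~~ [exists p, internal p e].

Definition incident (p : 'I_n) (e : {set V}) : bool :=
  [exists x in e, owner G x == p].

Definition wf_keg : Prop :=
  (forall e, e \in edges G -> #|e| = 2%N) /\
  (forall p e, e \in edges G ->
     internal p e || (external e && incident p e) -> 0 <= weight G p e).

Definition matching (M : {set {set V}}) : Prop :=
  forall e f, e \in M -> f \in M -> e != f -> [disjoint e & f].

Definition strategy (A : {set V}) (p : 'I_n) (M : {set {set V}}) : Prop :=
  M \subset [set e in edges_in A | internal p e] /\ matching M.

Definition profile := 'I_n -> {set {set V}}.

Definition is_profile (A : {set V}) (S : profile) : Prop :=
  forall p, strategy A p (S p).

Definition covered (S : profile) : {set V} :=
  \bigcup_(p < n) \bigcup_(e in S p) e.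

Definition ia_feasible (A : {set V}) (S : profile) (M : {set {set V}}) : Prop :=
  [/\ M \subset [set e in edges_in A | external e], matching M &
      forall e, e \in M -> [disjoint e & covered S]].

Definition ia_weight (e : {set V}) : rat :=
  \sum_(p < n | incident p e) weight G p e.

Definition ia_value (M : {set {set V}}) : rat := \sum_(e in M) ia_weight e.

Definition ia_optimal (A : {set V}) (S : profile) (M : {set {set V}}) : Prop :=
  ia_feasible A S M /\
  forall M', ia_feasible A S M' -> ia_value M' <= ia_value M.

Definition ia_unique_optimal (A : {set V}) (S : profile) : Prop :=
  exists M, ia_optimal A S M /\ forall M', ia_optimal A S M' -> M' = M.

Definition utility (p : 'I_n) (S : profile) (MI : {set {set V}}) : rat :=
  \sum_(e in S p) weight G p e + \sum_(e in MI | incident p e) weight G p e.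

End KEG.

(* Main.v *)
Require Import Defs.
From mathcomp Require Import all_boot all_order all_algebra.
Import Order.TTheory GRing.Theory Num.Theory.
Local Open Scope ring_scope.
Set Implicit Arguments.

Definition va : 'I_3 := @Ordinal 3 0 isT.
Definition vv : 'I_3 := @Ordinal 3 1 isT.
Definition vb : 'I_3 := @Ordinal 3 2 isT.
Definition eab : {set 'I_3} := [set va; vb].
Definition evb : {set 'I_3} := [set vv; vb].
Definition p0 : 'I_2 := ord0.
Definition p1 : 'I_2 := ord_max.
Definition G0 : keg 2 'I_3 := KEG (fun i : 'I_3 => if i == vb then p1 else p0)
  [set eab; evb]
  (fun p e => if p == p0 then (if vv \in e then 0 else 1) else (if vv \in e then 10%:R else 0)).

Lemma neq_ab_vb : eab != evb.
Proof. apply/eqP => /setP /(_ va). by rewrite !inE. Qed.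
Lemma int_ab p : internal G0 p eab = false.
Proof.
apply/negbTE/forall_inP => H.
have := H va; have := H vb; rewrite !inE !eqxx orbT /= => /(_ isT) /eqP <- /(_ isT).
by [].
Qed.
Lemma int_vb p : internal G0 p evb = false.
Proof.
apply/negbTE/forall_inP => H.
have := H vv; have := H vb; rewrite !inE !eqxx orbT /= => /(_ isT) /eqP <- /(_ isT).
by [].
Qed.
Lemma ext_ab : external G0 eab.
Proof. by apply/existsP => -[p]; rewrite int_ab. Qed.
Lemma ext_vb : external G0 evb.
Proof. by apply/existsP => -[p]; rewrite int_vb. Qed.
Lemma inc_ab p : incident G0 p eab.
Proof.
apply/existsP; case: p => [[|[|//]]] ?.
  by exists va; rewrite !inE eqxx /=; apply/eqP/val_inj.
by exists vb; rewrite !inE eqxx orbT /=; apply/eqP/val_inj.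
Qed.
Lemma inc_vb p : incident G0 p evb.
Proof.
apply/existsP; case: p => [[|[|//]]] ?.
  by exists vv; rewrite !inE eqxx /=; apply/eqP/val_inj.
by exists vb; rewrite !inE eqxx orbT /=; apply/eqP/val_inj.
Qed.
Lemma w_ab : ia_weight G0 eab = 1.
Proof.
rewrite /ia_weight (eq_bigl (fun _ => true)); last by move=> p; rewrite inc_ab.
by rewrite big_ord_recl big_ord1 /= !inE.
Qed.
Lemma w_vb : ia_weight G0 evb = 10%:R.
Proof.
rewrite /ia_weight (eq_bigl (fun _ => true)); last by move=> p; rewrite inc_vb.
by rewrite big_ord_recl big_ord1 /= !inE.
Qed.

Lemma prof_empty A S : is_profile G0 A S -> forall p, S p = set0.
Proof.
move=> HS p; case: (HS p) => Hsub _; apply/setP => e; rewrite inE.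
apply/negbTE/negP => He; move: (subsetP Hsub e He); rewrite !inE /=.
by case/andP=> /andP[/orP[]/eqP-> _]; rewrite ?int_ab ?int_vb.
Qed.

Lemma cov_empty A S : is_profile G0 A S -> covered S = set0.
Proof.
move=> HS; rewrite /covered big1 // => p _.
by rewrite (prof_empty HS) big1 // => e; rewrite inE.
Qed.

Lemma sub2 (T : finType) (x y : T) (M : {set T}) : M \subset [set x; y] ->
  ~~ ((x \in M) && (y \in M)) -> M = set0 \/ M = [set x] \/ M = [set y].
Proof.
move=> Hs Hn; case Hx: (x \in M); case Hy: (y \in M); rewrite Hx Hy in Hn => //.
- right; left; apply/setP => e; rewrite inE; apply/idP/eqP => [He|->//].
  by move: (subsetP Hs e He); rewrite !inE => /orP[/eqP//|/eqP Ey]; rewrite Ey Hy in He.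
- right; right; apply/setP => e; rewrite inE; apply/idP/eqP => [He|->//].
  by move: (subsetP Hs e He); rewrite !inE => /orP[/eqP Ey|/eqP//]; rewrite Ey Hx in He.
- left; apply/setP => e; rewrite inE; apply/negbTE/negP => He.
  by move: (subsetP Hs e He); rewrite !inE => /orP[]/eqP E; rewrite E ?Hx ?Hy in He.
Qed.

Lemma feas_gen A S M : ia_feasible G0 A S M ->
  M = set0 \/ M = [set eab] \/ M = [set evb].
Proof.
case=> Hsub Hm _; apply: sub2.
  apply/subsetP => e /(subsetP Hsub); rewrite !inE /=.
  by case/andP => /andP[].
apply/negP => /andP[H1 H2]; have := Hm _ _ H1 H2 neq_ab_vb.
by move=> /pred0P /(_ vb); rewrite /= !inE eqxx !orbT.
Qed.

Lemma evb_out S M : ia_feasible G0 [set~ vv] S M -> evb \notin M.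
Proof.
case=> Hsub _ _; apply/negP => /(subsetP Hsub); rewrite !inE /=.
case/andP => /andP[_ /subsetP /(_ vv)]; rewrite !inE eqxx /= => /(_ isT).
by [].
Qed.

Lemma feas_single A S e : is_profile G0 A S -> e \in edges G0 -> e \subset A ->
  external G0 e -> ia_feasible G0 A S [set e].
Proof.
move=> HS He HA Hx; split.
- by apply/subsetP => f; rewrite inE => /eqP ->; move: He; rewrite !inE HA Hx => ->.
- by move=> f g; rewrite !inE => /eqP -> /eqP ->; rewrite eqxx.
- move=> f _; rewrite (cov_empty HS); apply/pred0P => x; by rewrite /= inE andbF.
Qed.

Lemma val0 : ia_value G0 set0 = 0.
Proof. by rewrite /ia_value big_set0. Qed.
Lemma val1 e : ia_value G0 [set e] = ia_weight G0 e.
Proof. by rewrite /ia_value big_set1. Qed.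
Lemma evb_in : evb \in edges G0. Proof. by rewrite !inE eqxx orbT. Qed.
Lemma eab_in : eab \in edges G0. Proof. by rewrite !inE eqxx. Qed.
Lemma eab_sub : eab \subset [set~ vv].
Proof. by apply/subsetP => x; rewrite !inE => /orP[]/eqP->. Qed.

Lemma opt_T S M : is_profile G0 setT S -> ia_optimal G0 setT S M -> M = [set evb].
Proof.
move=> HS [Hf Hle]; have := Hle _ (feas_single HS evb_in (subsetT _) ext_vb).
case: (feas_gen Hf) => [->|[->|->]] //; rewrite !val1 ?val0 w_vb ?w_ab //.
Qed.

Lemma opt_R S M : is_profile G0 [set~ vv] S -> ia_optimal G0 [set~ vv] S M -> M = [set eab].
Proof.
move=> HS [Hf Hle]; have := Hle _ (feas_single HS eab_in eab_sub ext_ab).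
have := evb_out Hf.
case: (feas_gen Hf) => [->|[->|->]] //; rewrite ?val1 ?val0 ?w_ab //.
by rewrite inE eqxx.
Qed.

Lemma util S M : is_profile G0 setT S -> ia_optimal G0 setT S M -> utility G0 p0 S M = 0.
Proof.
move=> HS HM; rewrite /utility (opt_T HS HM) (prof_empty HS) big_set0 add0r.
rewrite (eq_bigl (fun e => e \in [set evb])); last first.
  by move=> e; rewrite inE; case: eqP => // ->; rewrite inc_vb.
by rewrite big_set1 /= !inE.
Qed.

Lemma util' S M : is_profile G0 [set~ vv] S -> ia_optimal G0 [set~ vv] S M -> utility G0 p0 S M = 1.
Proof.
move=> HS HM; rewrite /utility (opt_R HS HM) (prof_empty HS) big_set0 add0r.
rewrite (eq_bigl (fun e => e \in [set eab])); last first.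
  by move=> e; rewrite inE; case: eqP => // ->; rewrite inc_ab.
by rewrite big_set1 /= !inE.
Qed.

Theorem lemma2 :
  exists (V : finType) (G : keg 2 V) (p : 'I_2) (v : V),
    [/\ wf_keg G, owner G v = p,
        (* unique IA-optimal matching in the original game, for every profile *)
        forall S, is_profile G [set: V] S -> ia_unique_optimal G [set: V] S,
        (* and in the game where v (with its incident edges) is removed *)
        forall S, is_profile G [set~ v] S -> ia_unique_optimal G [set~ v] S &
        (* p's utility strictly increases after removing v *)
        forall S MI S' MI',
          is_profile G [set: V] S -> ia_optimal G [set: V] S MI ->
          is_profile G [set~ v] S' -> ia_optimal G [set~ v] S' MI' ->
          utility G p S MI < utility G p S' MI'].
Proof.
exists 'I_3, G0, p0, vv; split.
- split.
    by move=> e; rewrite !inE => /orP[]/eqP->; rewrite cards2.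
  move=> p e _ _ /=; case: (p == p0); case: (vv \in e) => //.
- by [].
- move=> S HS; exists [set evb]; split; last by move=> M'; apply: opt_T.
  split; first exact: (feas_single HS evb_in (subsetT _) ext_vb).
  move=> M' Hf; case: (feas_gen Hf) => [->|[->|->]]; rewrite ?val1 ?val0 w_vb ?w_ab //.
- move=> S HS; exists [set eab]; split; last by move=> M'; apply: opt_R.
  split; first exact: (feas_single HS eab_in eab_sub ext_ab).
  move=> M' Hf; have := evb_out Hf.
  case: (feas_gen Hf) => [->|[->|->]]; rewrite ?val1 ?val0 ?w_ab //.
  by rewrite inE eqxx.
- by move=> S MI S' MI' H1 H2 H3 H4; rewrite (util H1 H2) (util' H3 H4).
Qed.
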